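(* Let $\boldsymbol{d}$ be a graphical degree sequence with minimum degree at least $3$. Let $(G,H)$ be a switch on $\mathcal{G}(n,\boldsymbol{d})$ which removes the edges $a_1a_2,a_3a_4$ and inserts the edges $a_1a_3,a_2a_4$. Let $D=\{a_1,a_2,a_3,a_4\}$ and $A_i=N(a_i)\setminus D$ for $i\in[4]$. Suppose at least one of the following holds: (i) at least one of the diagonals $a_1a_4$, $a_2a_3$ is an edge of $G$; (ii) neither diagonal is an edge of $G$, and some pair of distinct elements of $D$ has a common neighbour in $[n]\setminus D$; (iii) for some $j\in[4]$ there is a triangle in $G$ on vertices $a_j,u,w$ with $\{u,w\}\cap D=\emptyset$ and $u\notin A_{5-j}$. Then there is a triangle-switch simulation path of length at most $4$ from $G$ to $H$.
   Context: $\mathcal{G}(n,\boldsymbol{d})$ is the set of labelled simple graphs on $[n]$ with vertex $i$ of degree $d_i$. A switch $(G,H)$ on $\mathcal{G}(n,\boldsymbol{d})$: $G\in\mathcal{G}(n,\boldsymbol{d})$, $F$ is a set of two vertex-disjoint edges of $G$ on vertex set $\{a_1,a_2,a_3,a_4\}$, $F'$ is a different perfect matching of these four vertices with $F'\cap(E(G)\setminus F)=\emptyset$, and $H$ has edge set $(E(G)\setminus F)\cup F'$. A triangle switch is a switch $(G,H)$ such that for some pair $aa'\in F\cup F'$, $a$ and $a'$ have a common neighbour in $G$ outside $\{a_1,a_2,a_3,a_4\}$. $N(a)$ denotes the neighbourhood of $a$ in $G$. A triangle-switch simulation path of length $\kappa$ from $G$ to $H$ is a sequence $G=X_0,X_1,\dots,X_\kappa=H$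 of graphs in $\mathcal{G}(n,\boldsymbol{d})$ such that each $(X_i,X_{i+1})$ is a triangle switch. *)

(* Defs.v *)
From mathcomp Require Import all_boot.
Set Implicit Arguments. Unset Strict Implicit. Unset Printing Implicit Defensive.

(* A labelled graph on [n] (vertices 'I_n) given by its edge set; an edge is a
   set of vertices (of size 2 for simple graphs). *)
Definition graph (n : nat) := {set {set 'I_n}}.

Section Graphs.
Variable n : nat.

Definition simple_graph (G : graph n) : Prop :=
  forall e, e \in G -> #|e| = 2.

Definition deg (G : graph n) (v : 'I_n) : nat := #|[set e in G | v \in e]|.

Definition in_Gnd (d : 'I_n -> nat) (G : graph n) : Prop :=
  simple_graph G /\ forall v, deg G v = d v.

Definition graphical (d : 'I_n -> nat) : Prop := exists G, in_Gnd d G.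

Definition nbhd (G : graph n) (a : 'I_n) : {set 'I_n} := [set v | [set a; v] \in G].

Definition perfect_matching_of (M : {set {set 'I_n}}) (S : {set 'I_n}) : Prop :=
  (forall e, e \in M -> #|e| = 2) /\
  (forall e1 e2, e1 \in M -> e2 \in M -> e1 != e2 -> [disjoint e1 & e2]) /\
  cover M = S.

Definition switch_via (d : 'I_n -> nat) (G H : graph n) (F F' : {set {set 'I_n}}) : Prop :=
  [/\ in_Gnd d G, F \subset G, #|F| = 2,
      perfect_matching_of F (cover F) (* two vertex-disjoint edges *) &
      [/\ perfect_matching_of F' (cover F), F' != F,
          F' :&: (G :\: F) = set0 & H = (G :\: F) :|: F'] ].

Definition triangle_switch (d : 'I_n -> nat) (G H : graph n) : Prop :=
  exists F F', switch_via d G H F F' /\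
    exists a a', [set a; a'] \in F :|: F' /\
      exists v, [/\ v \notin cover F, v \in nbhd G a & v \in nbhd G a'].

Definition tss_path (d : 'I_n -> nat) (G H : graph n) (k : nat) : Prop :=
  exists s : seq (graph n), [/\ size s = k, last G s = H &
    forall i, i < k -> triangle_switch d (nth G (G :: s) i) (nth G s i)].

Definition quad (a1 a2 a3 a4 : 'I_n) (j : 'I_4) : 'I_n :=
  nth a1 [:: a1; a2; a3; a4] j.
End Graphs.

(* Main.v *)
Require Import Defs.
From mathcomp Require Import all_boot.
Set Implicit Arguments. Unset Strict Implicit. Unset Printing Implicit Defensive.


Lemma eq_set2 (T : finType) (a b c d : T) :
  ([set a; b] == [set c; d]) = ((a == c) && (b == d)) || ((a == d) && (b == c)).
Proof.
apply/idP/idP => [/eqP E|].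
  have ha : a \in [set c; d] by rewrite -E set21.
  have hb : b \in [set c; d] by rewrite -E set22.
  have hc : c \in [set a; b] by rewrite E set21.
  have hd : d \in [set a; b] by rewrite E set22.
  move: ha hb hc hd; rewrite !inE.
  case/orP=>/eqP->; case/orP=>/eqP->; rewrite !eqxx /= ?orbT ?andbT //.
    by rewrite eq_sym orbb.
  by rewrite eq_sym orbb.
by case/orP=>/andP[/eqP-> /eqP->] //; rewrite setUC.
Qed.

Section S.
Variable n : nat.
Variable d : 'I_n -> nat.

Definition sw (X : graph n) (p q r s : 'I_n) : graph n :=
  (X :\: [set [set p; q]; [set r; s]]) :|: [set [set p; r]; [set q; s]].

Lemma in_sw X p q r s e : (e \in sw X p q r s) =
  ((e \in X) && (e != [set p; q]) && (e != [set r; s])) || (e == [set p; r]) || (e == [set q; s]).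
Proof.
rewrite !inE; by case: (e \in X); case: (e == [set p; q]); case: (e == [set r; s]).
Qed.

Lemma cover2 (A B : {set 'I_n}) : cover [set A; B] = A :|: B.
Proof.
apply/setP => x; apply/bigcupP/setUP.
  by case=> e; rewrite !inE => /orP[]/eqP-> ?; [left|right].
by case=> h; [exists A; rewrite ?inE ?eqxx | exists B; rewrite ?inE ?eqxx ?orbT].
Qed.

Lemma card_sel1 (A : {set 'I_n}) v : #|[set e in [set A] | v \in e]| = (v \in A).
Proof.
case hA: (v \in A).
  have -> : [set e in [set A] | v \in e] = [set A].
    by apply/setP => e; rewrite !inE; case: eqVneq => // ->.
  by rewrite cards1.
have -> : [set e in [set A] | v \in e] = set0.
  by apply/setP => e; rewrite !inE; case: eqVneq => // ->; rewrite hA.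
by rewrite cards0.
Qed.

Lemma card_sel2 (A B : {set 'I_n}) v : A != B ->
  #|[set e in [set A; B] | v \in e]| = (v \in A) + (v \in B).
Proof.
move=> AB.
have -> : [set e in [set A; B] | v \in e] =
   [set e in [set A] | v \in e] :|: [set e in [set B] | v \in e].
  by apply/setP => e; rewrite !inE andb_orl.
rewrite cardsU !card_sel1.
have -> : [set e in [set A] | v \in e] :&: [set e in [set B] | v \in e] = set0.
  apply/setP => e; rewrite !inE; case: eqVneq => // ->.
  by rewrite (negbTE AB) andbF.
by rewrite cards0 subn0.
Qed.

Lemma sw_Gnd X p q r s :
  in_Gnd d X -> p != q -> p != r -> p != s -> q != r -> q != s -> r != s ->
  [set p; q] \in X -> [set r; s] \in X -> [set p; r] \notin X -> [set q; s] \notin X ->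
  in_Gnd d (sw X p q r s).
Proof.
move=> [sX dX] pq pr ps qr qs rs Hpq Hrs Hpr Hqs; split.
  move=> e; rewrite in_sw => /orP[/orP[/andP[/andP[/sX //]]|]|] /eqP->; by rewrite cards2 ?pr ?qs.
move=> v; rewrite -dX /deg.
set S := [set e in X | v \in e].
set F := [set [set p; q]; [set r; s]].
set F' := [set [set p; r]; [set q; s]].
have FF : [set p; q] != [set r; s].
  by rewrite eq_set2 (negbTE pr) (negbTE ps).
have FF' : [set p; r] != [set q; s].
  by rewrite eq_set2 (negbTE pq) (negbTE ps).
have -> : [set e in sw X p q r s | v \in e] = (S :\: F) :|: [set e in F' | v \in e].
  apply/setP => e; rewrite !inE; by case: (e \in X); case: (v \in e); case: (e == [set p; q]);
    case: (e == [set r; s]); case: (e == [set p; r]); case: (e == [set q; s]).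
rewrite cardsU.
have -> : (S :\: F) :&: [set e in F' | v \in e] = set0.
  apply/setP => e; rewrite !inE; apply/negP => /andP[/andP[_ /andP[eX _]] /andP[/orP[]/eqP E _]].
    by move: Hpr; rewrite -E eX.
  by move: Hqs; rewrite -E eX.
rewrite cards0 subn0 -(cardsID F S).
have -> : S :&: F = [set e in F | v \in e].
  apply/setP => e; rewrite !inE; apply/idP/idP.
    by case/andP=> /andP[_ ->] ->.
  by case/andP=> /orP[]/eqP-> ->; rewrite ?Hpq ?Hrs eqxx ?orbT.
rewrite card_sel2 // card_sel2 // !inE addnC; congr (_ + _).
case: (eqVneq v p) => [Ep|vp]; case: (eqVneq v q) => [Eq|vq]; case: (eqVneq v r) => [Er|vr];
  case: (eqVneq v s) => [Es|vs] //=; subst; rewrite ?eqxx in pq pr ps qr qs rs; by [].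
Qed.

Lemma disj2 (a b c e : 'I_n) : a != c -> a != e -> b != c -> b != e ->
  [disjoint [set a; b] & [set c; e]].
Proof.
move=> ac ae bc be; rewrite -setI_eq0; apply/negPn/set0Pn => -[x];
  rewrite !inE => /andP[/orP[]/eqP-> /orP[]/eqP E];
  by rewrite ?E eqxx in ac ae bc be.
Qed.

Definition common (X : graph n) (a b v : 'I_n) := ([set a; v] \in X) && ([set b; v] \in X).

Lemma step X p q r s :
  in_Gnd d X -> p != q -> p != r -> p != s -> q != r -> q != s -> r != s ->
  [set p; q] \in X -> [set r; s] \in X -> [set p; r] \notin X -> [set q; s] \notin X ->
  (exists v, [&& v != p, v != q, v != r, v != s &
     [|| common X p q v, common X r s v, common X p r v | common X q s v]]) ->
  triangle_switch d X (sw X p q r s) /\ in_Gnd d (sw X p q r s).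
Proof.
move=> GX pq pr ps qr qs rs Hpq Hrs Hpr Hqs [v /and5P[vp vq vr vs W]].
split; last exact: sw_Gnd.
have FF : [set p; q] != [set r; s].
  by rewrite eq_set2 (negbTE pr) (negbTE ps).
have FF' : [set p; r] != [set q; s].
  by rewrite eq_set2 (negbTE pq) (negbTE ps).
have cov : cover [set [set p; q]; [set r; s]] = [set p; q; r; s].
  by rewrite cover2 setUA.
exists [set [set p; q]; [set r; s]], [set [set p; r]; [set q; s]]; split.
  split=> //.
  - by apply/subsetP => e; rewrite !inE => /orP[]/eqP->.
  - by rewrite cards2 FF.
  - split; first by move=> e; rewrite !inE => /orP[]/eqP->; rewrite cards2 ?pq ?rs.
    split=> //.
    move=> e1 e2; rewrite !inE => /orP[]/eqP-> /orP[]/eqP->; rewrite ?eqxx // => _.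
      by apply: disj2.
    by rewrite disjoint_sym; apply: disj2.
  - split=> //.
    + split; first by move=> e; rewrite !inE => /orP[]/eqP->; rewrite cards2 ?pr ?qs.
      split.
        move=> e1 e2; rewrite !inE => /orP[]/eqP-> /orP[]/eqP->; rewrite ?eqxx // => _.
          by apply: disj2; rewrite // eq_sym.
        by rewrite disjoint_sym; apply: disj2; rewrite // eq_sym.
      rewrite cov cover2; apply/setP => x; rewrite !inE.
      by case: (x == p); case: (x == q); case: (x == r); case: (x == s).
    + apply/eqP => E.
      have : [set p; r] \in [set [set p; q]; [set r; s]] by rewrite -E set21.
      by rewrite !inE !eq_set2 !eqxx (negbTE pr) (negbTE ps) (eq_sym r q) (negbTE qr) (negbTE pq).
    + apply/setP => e; rewrite !inE; apply/negP => /andP[/orP[]/eqP-> /andP[_ E]].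
        by rewrite E in Hpr.
      by rewrite E in Hqs.
have vc : v \notin cover [set [set p; q]; [set r; s]].
  by rewrite cov !inE negb_or !negb_or vp vq vr vs.
case/or4P: W => /andP[h1 h2].
- by exists p, q; split; [rewrite !inE eqxx | exists v; rewrite !inE].
- by exists r, s; split; [rewrite !inE eqxx !orbT | exists v; rewrite !inE].
- by exists p, r; split; [rewrite !inE eqxx !orbT | exists v; rewrite !inE].
- by exists q, s; split; [rewrite !inE eqxx !orbT | exists v; rewrite !inE].
Qed.

Lemma edge_neq X a b : in_Gnd d X -> [set a; b] \in X -> a != b.
Proof. by case=> sX _ /sX; rewrite cards2; case: eqVneq. Qed.

Lemma path1 G G1 : triangle_switch d G G1 -> tss_path d G G1 1.
Proof. by move=> h1; exists [:: G1]; split=> // -[|]. Qed.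
Lemma path2 G G1 G2 : triangle_switch d G G1 -> triangle_switch d G1 G2 -> tss_path d G G2 2.
Proof. by move=> h1 h2; exists [:: G1; G2]; split=> // -[|[|]]. Qed.
Lemma path3 G G1 G2 G3 : triangle_switch d G G1 -> triangle_switch d G1 G2 ->
  triangle_switch d G2 G3 -> tss_path d G G3 3.
Proof. by move=> h1 h2 h3; exists [:: G1; G2; G3]; split=> // -[|[|[|]]]. Qed.
Lemma path4 G G1 G2 G3 G4 : triangle_switch d G G1 -> triangle_switch d G1 G2 ->
  triangle_switch d G2 G3 -> triangle_switch d G3 G4 -> tss_path d G G4 4.
Proof. by move=> h1 h2 h3 h4; exists [:: G1; G2; G3; G4]; split=> // -[|[|[|[|]]]]. Qed.
End S.

Ltac neq_rw := repeat match goal with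
 | H : is_true (?a != ?b) |- context [?a == ?b] => rewrite (negbTE H)
 | H : is_true (?a != ?b) |- context [?b == ?a] => rewrite [b == a]eq_sym (negbTE H)
 | H : is_true ([set ?a; ?b] \in ?X) |- context [[set ?a; ?b] \in ?X] => rewrite H
 | H : is_true ([set ?a; ?b] \in ?X) |- context [[set ?b; ?a] \in ?X] => rewrite [[set b; a]]setUC H
 | H : is_true ([set ?a; ?b] \notin ?X) |- context [[set ?a; ?b] \in ?X] => rewrite (negbTE H)
 | H : is_true ([set ?a; ?b] \notin ?X) |- context [[set ?b; ?a] \in ?X] => rewrite [[set b; a]]setUC (negbTE H)
 end.

Ltac sv := repeat match goal with H : is_true ([set _; _] != [set _; _]) |- _ => move: H end;
  rewrite /common ?in_sw ?eq_set2 ?eqxx /=; neq_rw; rewrite /= ?eqxx /=;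
  rewrite ?(andbT, andbF, orbT, orbF, andTb, andFb, orTb, orFb) /=; by [].

Ltac svd := repeat match goal with H : is_true ([set _; _] != [set _; _]) |- _ => move: H end;
  rewrite /common ?in_sw ?eq_set2 ?eqxx /=; neq_rw; rewrite /= ?eqxx /=;
  rewrite ?(andbT, andbF, orbT, orbF, andTb, andFb, orTb, orFb) /=.
Ltac seteqd := let e := fresh "e" in apply/setP => e; rewrite ?in_sw;
  (repeat match goal with |- context [e == ?E] => case: (eqVneq e E) => [?|?]; [subst e|] end); svd.
Ltac dostep w := apply: step => //; (solve [sv] || (exists w; sv)).

Ltac seteq := let e := fresh "e" in apply/setP => e; rewrite ?in_sw;
  (repeat match goal with |- context [e == ?E] => case: (eqVneq e E) => [?|?]; [subst e|] end); sv.


Section C.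
Variable n : nat.
Variable d : 'I_n -> nat.

Lemma caseC3 (G : graph n) b1 b2 b3 b4 u w : in_Gnd d G ->
  b1 != b2 -> b1 != b3 -> b1 != b4 -> b2 != b3 -> b2 != b4 -> b3 != b4 ->
  [set b1; b2] \in G -> [set b3; b4] \in G -> [set b1; b3] \notin G -> [set b2; b4] \notin G ->
  u != b1 -> u != b2 -> u != b3 -> u != b4 -> w != b1 -> w != b2 -> w != b3 -> w != b4 ->
  [set b1; u] \in G -> [set b1; w] \in G -> [set u; w] \in G -> [set b4; u] \notin G ->
  exists k, k <= 4 /\ tss_path d G (sw G b1 b2 b3 b4) k.
Proof.
move=> GG *.
have uw : u != w by apply: edge_neq GG _.
have [t1 g1] : triangle_switch d G (sw G b1 u b3 b4) /\ in_Gnd d (sw G b1 u b3 b4).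
  dostep w.
have [t2 g2] : triangle_switch d (sw G b1 u b3 b4) (sw (sw G b1 u b3 b4) b1 b2 u b4) /\
     in_Gnd d (sw (sw G b1 u b3 b4) b1 b2 u b4).
  dostep w.
exists 2; split=> //.
have -> : sw G b1 b2 b3 b4 = sw (sw G b1 u b3 b4) b1 b2 u b4 by seteq.
exact: path2 t1 t2.
Qed.

Lemma caseA (G : graph n) b1 b2 b3 b4 x : in_Gnd d G ->
  b1 != b2 -> b1 != b3 -> b1 != b4 -> b2 != b3 -> b2 != b4 -> b3 != b4 ->
  [set b1; b2] \in G -> [set b3; b4] \in G -> [set b1; b3] \notin G -> [set b2; b4] \notin G ->
  [set b1; b4] \in G ->
  x != b1 -> x != b2 -> x != b3 -> x != b4 ->
  [set b3; x] \in G -> [set b2; x] \notin G ->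
  exists k, k <= 4 /\ tss_path d G (sw G b1 b2 b3 b4) k.
Proof.
move=> GG *.
have [t1 g1] : triangle_switch d G (sw G b1 b2 b3 x) /\ in_Gnd d (sw G b1 b2 b3 x).
  dostep b4.
have [t2 g2] : triangle_switch d (sw G b1 b2 b3 x) (sw (sw G b1 b2 b3 x) b2 x b4 b3) /\
     in_Gnd d (sw (sw G b1 b2 b3 x) b2 x b4 b3).
  dostep b1.
exists 2; split=> //.
have -> : sw G b1 b2 b3 b4 = sw (sw G b1 b2 b3 x) b2 x b4 b3. by seteq.
exact: path2 t1 t2.
Qed.

Lemma caseC4 (G : graph n) b1 b2 b3 b4 x : in_Gnd d G ->
  b1 != b2 -> b1 != b3 -> b1 != b4 -> b2 != b3 -> b2 != b4 -> b3 != b4 ->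
  [set b1; b2] \in G -> [set b3; b4] \in G -> [set b1; b3] \notin G -> [set b2; b4] \notin G ->
  [set b1; b4] \in G -> [set b2; b3] \in G ->
  x != b1 -> x != b2 -> x != b3 -> x != b4 ->
  [set b3; x] \in G -> [set b2; x] \in G ->
  exists k, k <= 4 /\ tss_path d G (sw G b1 b2 b3 b4) k.
Proof.
move=> GG *.
have [t1 g1] : triangle_switch d G (sw G b3 b2 b1 b4) /\ in_Gnd d (sw G b3 b2 b1 b4).
  dostep x.
have [t2 g2] : triangle_switch d (sw G b3 b2 b1 b4) (sw (sw G b3 b2 b1 b4) b1 b2 b4 b3) /\
     in_Gnd d (sw (sw G b3 b2 b1 b4) b1 b2 b4 b3).
  dostep x.
exists 2; split=> //.
have -> : sw G b1 b2 b3 b4 = sw (sw G b3 b2 b1 b4) b1 b2 b4 b3 by seteq.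
exact: path2 t1 t2.
Qed.

Lemma caseR (G : graph n) b1 b2 b3 b4 x y : in_Gnd d G ->
  b1 != b2 -> b1 != b3 -> b1 != b4 -> b2 != b3 -> b2 != b4 -> b3 != b4 ->
  [set b1; b2] \in G -> [set b3; b4] \in G -> [set b1; b3] \notin G -> [set b2; b4] \notin G ->
  [set b1; b4] \in G -> [set b2; b3] \notin G ->
  x != b1 -> x != b2 -> x != b3 -> x != b4 ->
  y != b1 -> y != b2 -> y != b3 -> y != b4 -> x != y ->
  [set b3; x] \in G -> [set b2; x] \in G -> [set b3; y] \in G -> [set b2; y] \in G ->
  [set b4; x] \notin G -> [set b4; y] \notin G ->
  exists k, k <= 4 /\ tss_path d G (sw G b1 b2 b3 b4) k.
Proof.
move=> GG *.
set G1 := sw G b3 b4 b2 y.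
have [t1 g1] : triangle_switch d G G1 /\ in_Gnd d G1 by dostep x.
set G2 := sw G1 b4 b1 x b3.
have [t2 g2] : triangle_switch d G1 G2 /\ in_Gnd d G2 by rewrite /G2 /G1; dostep b2.
set G3 := sw G2 b1 b2 b4 y.
have [t3 g3] : triangle_switch d G2 G3 /\ in_Gnd d G3 by rewrite /G3 /G2 /G1; dostep b3.
set G4 := sw G3 b4 x b2 b3.
have [t4 g4] : triangle_switch d G3 G4 /\ in_Gnd d G4 by rewrite /G4 /G3 /G2 /G1; dostep y.
exists 4; split=> //.
have -> : sw G b1 b2 b3 b4 = G4 by rewrite /G4 /G3 /G2 /G1; seteq.
exact: path4 t1 t2 t3 t4.
Qed.

Lemma caseC2 (G : graph n) b1 b2 b3 b4 v : in_Gnd d G ->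
  b1 != b2 -> b1 != b3 -> b1 != b4 -> b2 != b3 -> b2 != b4 -> b3 != b4 ->
  [set b1; b2] \in G -> [set b3; b4] \in G -> [set b1; b3] \notin G -> [set b2; b4] \notin G ->
  [set b1; b4] \notin G -> [set b2; b3] \notin G ->
  v != b1 -> v != b2 -> v != b3 -> v != b4 ->
  [|| common G b1 b2 v, common G b3 b4 v, common G b1 b3 v, common G b2 b4 v,
      common G b1 b4 v | common G b2 b3 v] ->
  exists k, k <= 4 /\ tss_path d G (sw G b1 b2 b3 b4) k.
Proof.
move=> GG ? ? ? ? ? ? ? ? ? ? ? ? ? ? ? ? W.
have [W1|W2] : [|| common G b1 b2 v, common G b3 b4 v, common G b1 b3 v | common G b2 b4 v]
   \/ (common G b1 b4 v || common G b2 b3 v).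
  by apply/orP; move: W; rewrite !orbA.
  have [t1 _] : triangle_switch d G (sw G b1 b2 b3 b4) /\ in_Gnd d (sw G b1 b2 b3 b4).
    by apply: step => //; exists v; rewrite W1 !andbT; apply/and4P; split.
  by exists 1; split=> //; apply: path1.
have [t1 g1] : triangle_switch d G (sw G b1 b2 b4 b3) /\ in_Gnd d (sw G b1 b2 b4 b3).
  apply: step => //; try sv; exists v; move: W2; rewrite /common => /orP[]/andP[? ?]; sv.
have [t2 g2] : triangle_switch d (sw G b1 b2 b4 b3) (sw (sw G b1 b2 b4 b3) b1 b4 b3 b2) /\
     in_Gnd d (sw (sw G b1 b2 b4 b3) b1 b4 b3 b2).
  apply: step => //; try sv; exists v; move: W2; rewrite /common => /orP[]/andP[? ?]; sv.
exists 2; split=> //.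
have -> : sw G b1 b2 b3 b4 = sw (sw G b1 b2 b4 b3) b1 b4 b3 b2 by seteq.
exact: path2 t1 t2.
Qed.

Lemma deg_nb (X : graph n) v c1 c2 : in_Gnd d X -> 3 <= d v ->
  exists w, [&& [set v; w] \in X, w != c1 & w != c2].
Proof.
move=> [sX dX] hv.
case: (pickP [pred w | [&& [set v; w] \in X, w != c1 & w != c2]]) => [w hw|none];
  first by exists w.
exfalso.
have sub : [set e in X | v \in e] \subset [set [set v; c1]; [set v; c2]].
  apply/subsetP => e; rewrite inE => /andP[eX ve].
  have /eqP/cards2P[x [y [xy E]]] := sX e eX.
  have [w Ew] : exists w, e = [set v; w].
    move: ve; rewrite E !inE => /orP[]/eqP->; [by exists y | by exists x; rewrite setUC].
  move: (none w); rewrite /= -Ew eX /= => /negbT; rewrite negb_and !negbK.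
  by case/orP => /eqP <-; rewrite Ew !inE eqxx ?orbT.
have := subset_leq_card sub; rewrite cards2.
have -> : #|[set e in X | v \in e]| = d v by rewrite -dX.
move=> h; have := leq_trans hv h; by case: (_ != _).
Qed.

Lemma caseC1 (G : graph n) b1 b2 b3 b4 : in_Gnd d G -> (forall v, 3 <= d v) ->
  b1 != b2 -> b1 != b3 -> b1 != b4 -> b2 != b3 -> b2 != b4 -> b3 != b4 ->
  [set b1; b2] \in G -> [set b3; b4] \in G -> [set b1; b3] \notin G -> [set b2; b4] \notin G ->
  [set b1; b4] \in G ->
  exists k, k <= 4 /\ tss_path d G (sw G b1 b2 b3 b4) k.
Proof.
move=> GG hd ? ? ? ? ? ? ? ? ? ? ?.
case: (pickP [pred x | [&& x != b1, x != b2, x != b3, x != b4,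
    [set b3; x] \in G & [set b2; x] \notin G]]) => [x /=|noA].
  case/and5P => ? ? ? ? /andP[? ?]; exact: (caseA (x:=x)).
case: (pickP [pred x | [&& x != b1, x != b2, x != b3, x != b4,
    [set b2; x] \in G & [set b3; x] \notin G]]) => [x /=|noB].
  case/and5P => ? ? ? ? /andP[? ?].
  have -> : sw G b1 b2 b3 b4 = sw G b4 b3 b2 b1 by seteq.
  by apply: (caseA (x:=x)) => //; sv.
have [x /and3P[hx3 xb2 xb4]] := deg_nb b2 b4 GG (hd b3).
have xb3 : x != b3 by rewrite eq_sym; apply: edge_neq GG hx3.
have xb1 : x != b1 by apply/eqP => E; move: hx3; rewrite E; sv.
have hx2 : [set b2; x] \in G.
  case h: ([set b2; x] \in G) => //; move: (noA x); rewrite /= h; sv.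
case h23 : ([set b2; b3] \in G).
  exact: (caseC4 (x:=x)).
move/negbT: h23 => h23.
have [y /and3P[hy3 yb4 yx]] := deg_nb b4 x GG (hd b3).
have yb3 : y != b3 by rewrite eq_sym; apply: edge_neq GG hy3.
have yb1 : y != b1 by apply/eqP => E; move: hy3; rewrite E; sv.
have yb2 : y != b2 by apply/eqP => E; move: hy3; rewrite E; sv.
have hy2 : [set b2; y] \in G.
  case h: ([set b2; y] \in G) => //; move: (noA y); rewrite /= h; sv.
have one : forall z, z != b1 -> z != b2 -> z != b3 -> z != b4 -> [set b3; z] \in G ->
   [set b4; z] \in G -> exists k, k <= 4 /\ tss_path d G (sw G b1 b2 b3 b4) k.
  move=> z ? ? ? ? ? ?.
  have [t1 _] : triangle_switch d G (sw G b1 b2 b3 b4) /\ in_Gnd d (sw G b1 b2 b3 b4).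
    by dostep z.
  by exists 1; split=> //; apply: path1.
case h4x : ([set b4; x] \in G); first exact: (one x).
case h4y : ([set b4; y] \in G); first exact: (one y).
move/negbT: h4x => h4x; move/negbT: h4y => h4y.
apply: (caseR (x:=x) (y:=y)) => //; try sv.
Qed.
End C.

Lemma disj_neq n (a b c e : 'I_n) : [disjoint [set a; b] & [set c; e]] ->
  [/\ a != c, a != e, b != c & b != e].
Proof.
move=> dj.
have H z : z \in [set a; b] -> z \notin [set c; e].
  by move=> za; apply/negP => zc; move: dj; rewrite -setI_eq0 => /eqP/setP/(_ z); rewrite in_setI za zc in_set0.
split; apply/eqP => E.
- by move: (H a); rewrite !inE eqxx E eqxx => /(_ isT).
- by move: (H a); rewrite !inE eqxx E eqxx orbT => /(_ isT).
- by move: (H b); rewrite !inE eqxx orbT E eqxx => /(_ isT).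
- by move: (H b); rewrite !inE eqxx orbT E eqxx orbT => /(_ isT).
Qed.

Unset Implicit Arguments.
Set Strict Implicit.

Theorem lemma1 (n : nat) (d : 'I_n -> nat) (G H : graph n) (a1 a2 a3 a4 : 'I_n) :
  graphical d ->
  (forall v, 3 <= d v) ->
  switch_via d G H [set [set a1; a2]; [set a3; a4]] [set [set a1; a3]; [set a2; a4]] ->
  let D := [set a1; a2; a3; a4] in
  let a := quad a1 a2 a3 a4 in
  let A := fun j : 'I_4 => nbhd G (a j) :\: D in
  ( ([set a1; a4] \in G \/ [set a2; a3] \in G)
    \/ ([set a1; a4] \notin G /\ [set a2; a3] \notin G /\
        exists x y, [/\ x \in D, y \in D, x != y &
          exists v, [/\ v \notin D, v \in nbhd G x & v \in nbhd G y]])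
    \/ (exists (j : 'I_4) (u w : 'I_n),
          [/\ [set a j; u] \in G, [set a j; w] \in G, [set u; w] \in G &
              [/\ u \notin D, w \notin D & u \notin A (rev_ord j)]]) ) ->
  exists k, k <= 4 /\ tss_path d G H k.
Proof.
move=> _ hd [GG FG cF [_ [pmF _]] [_ _ F'X ->]] D a A cond.
change ((G :\: [set [set a1; a2]; [set a3; a4]]) :|: [set [set a1; a3]; [set a2; a4]])
  with (sw G a1 a2 a3 a4).
have h12 : [set a1; a2] \in G by apply: (subsetP FG); rewrite !inE eqxx.
have h34 : [set a3; a4] \in G by apply: (subsetP FG); rewrite !inE eqxx orbT.
have a12 : a1 != a2 by apply: edge_neq GG h12.
have a34 : a3 != a4 by apply: edge_neq GG h34.
have FF : [set a1; a2] != [set a3; a4].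
  by move: cF; rewrite cards2; case: (_ != _).
have [a13 a14 a23 a24] := disj_neq (pmF _ _ (set21 _ _) (set22 _ _) FF).
have n13 : [set a1; a3] \notin G.
  apply/negP => h; move/setP: F'X => /(_ [set a1; a3]); rewrite !inE h eqxx /=; sv.
have n24 : [set a2; a4] \notin G.
  apply/negP => h; move/setP: F'X => /(_ [set a2; a4]); rewrite !inE h eqxx /= ?orbT; sv.
case: cond => [[h14|h23]|[[n14 [n23 [x [y [hx hy xy [v [vD vx vy]]]]]]]|
   [j [u [w [hju hjw huw [uD wD uA]]]]]]].
- exact: caseC1.
- have -> : sw G a1 a2 a3 a4 = sw G a2 a1 a4 a3 by seteq.
  by apply: caseC1 => //; sv.
- move: vD; rewrite /D !inE !negb_or => /andP[/andP[/andP[v1 v2] v3] v4].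
  rewrite !inE in vx vy.
  apply: (caseC2 (v:=v)) => //.
  move: hx hy xy vx vy; rewrite /D !inE => /orP[/orP[/orP[]|]|]/eqP-> /orP[/orP[/orP[]|]|]/eqP->; rewrite ?eqxx //= => _ vx vy;
    sv.
- move: uD wD; rewrite /D !inE !negb_or => /andP[/andP[/andP[u1 u2] u3] u4] /andP[/andP[/andP[w1 w2] w3] w4].
  case: j hju hjw uA => [[|[|[|[|j]]]] hj] //=; rewrite /A /a /quad /D /= !inE !negb_or
     ?u1 ?u2 ?u3 ?u4 /= => hju hjw uA.
  + by apply: (caseC3 (u:=u) (w:=w)) => //; sv.
  + have -> : sw G a1 a2 a3 a4 = sw G a2 a1 a4 a3 by seteq.
    by apply: (caseC3 (u:=u) (w:=w)) => //; sv.
  + have -> : sw G a1 a2 a3 a4 = sw G a3 a4 a1 a2 by seteq.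
    by apply: (caseC3 (u:=u) (w:=w)) => //; sv.
  + have -> : sw G a1 a2 a3 a4 = sw G a4 a3 a2 a1 by seteq.
    by apply: (caseC3 (u:=u) (w:=w)) => //; sv.
Qed.
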